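(* If a (possibly randomized) adversarial no-regret algorithm satisfies $R_i(T)\le B$ with probability $1-\delta$ against any adversary, then with probability $1-\delta$ it also satisfies $R_i(t)\le B$ simultaneously for all $t\le T$, against any adversary.
   Context: Online learning: at each timestep $t$ the learner picks a strategy $\mathbf{x}^t$ from a compact convex set $\mathcal{X}\subset\mathbb{R}^m$ (or an action sampled from it) and an adaptive adversary picks a bounded linear utility vector $\mathbf{u}^t$. $R_i(t)$ denotes the learner's regret after the first $t$ timesteps, i.e. $\max_{\mathbf{x}\in\mathcal{X}}\sum_{\tau=1}^t\langle\mathbf{u}^\tau,\mathbf{x}-\mathbf{x}^\tau\rangle$ (or its realized-action analogue). The adversary is allowed to choose the zero utility vector. *)

(* Defs.v *)
From HB Require Import structures.
From mathcomp Require Import all_boot all_order all_algebra.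
From mathcomp Require Import all_classical all_reals all_analysis.
Set Implicit Arguments. Unset Strict Implicit. Unset Printing Implicit Defensive.
Import Order.TTheory GRing.Theory Num.Theory.
Import numFieldNormedType.Exports.
Local Open Scope classical_set_scope.
Local Open Scope ring_scope.

Definition dotv (R : realType) (m : nat) (u x : 'rV[R]_m) : R :=
  \sum_(i < m) u ord0 i * x ord0 i.

Definition convexS (R : realType) (m : nat) (X : set 'rV[R]_m) : Prop :=
  forall x y l, X x -> X y -> 0 <= l <= 1 -> X (l *: x + (1 - l) *: y).

(* A history: the list of past rounds (strategy x^s, utility u^s), oldest first. *)
Definition history (R : realType) (m : nat) := seq ('rV[R]_m * 'rV[R]_m).

(* A (possibly randomized) learner: given its random seed w and the past
   history, it outputs the strategy (or realized action, as a point of X)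
   for the current round. *)
Definition learner (R : realType) (m : nat) (Omega : Type) :=
  Omega -> history R m -> 'rV[R]_m.

Definition adversary (R : realType) (m : nat) := history R m -> 'rV[R]_m.

Fixpoint play (R : realType) (m : nat) (Omega : Type)
  (L : learner R m Omega) (A : adversary R m) (w : Omega) (t : nat)
  : history R m :=
  match t with
  | 0 => [::]
  | t'.+1 => let h := play L A w t' in rcons h (L w h, A h)
  end.

Definition regret (R : realType) (m : nat) (Omega : Type) (X : set 'rV[R]_m)
  (L : learner R m Omega) (A : adversary R m) (w : Omega) (t : nat) : R :=
  sup [set (\sum_(p <- play L A w t) dotv p.2 (x - p.1)) | x in X].

(* Main.v *)
Require Import Defs.
From HB Require Import structures.
From mathcomp Require Import all_boot all_order all_algebra.
From mathcomp Require Import all_classical all_reals all_analysis.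
Import Order.TTheory GRing.Theory Num.Theory.
Import numFieldNormedType.Exports.
Local Open Scope classical_set_scope.
Local Open Scope ring_scope.

Section Aux.
Variables (R : realType) (m : nat) (Omega : Type) (X : set 'rV[R]_m).

Definition reg (h : history R m) : R :=
  sup [set (\sum_(p <- h) dotv p.2 (x - p.1)) | x in X].

Lemma size_play (L : learner R m Omega) A w t : size (play L A w t) = t.
Proof. by elim: t => //= t IH; rewrite size_rcons IH. Qed.

Lemma take_play (L : learner R m Omega) A w t k : (k <= t)%N ->
  take k (play L A w t) = play L A w k.
Proof.
elim: t => [|t IH]; first by rewrite leqn0 => /eqP ->.
rewrite leq_eqVlt => /orP [/eqP ->|]; first by rewrite take_oversize // size_play.
rewrite ltnS => kt /=; rewrite -cats1 takel_cat ?size_play //; exact: IH.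
Qed.

Lemma reg_rcons0 (h : history R m) a : reg (rcons h (a, 0)) = reg h.
Proof.
have E : forall x, \sum_(p <- rcons h (a, 0)) dotv p.2 (x - p.1) =
                   \sum_(p <- h) dotv p.2 (x - p.1).
  move=> x; rewrite -cats1 big_cat /= big_seq1.
  have -> : dotv (0 : 'rV[R]_m) (x - a) = 0.
    by rewrite /dotv big1 // => i _; rewrite mxE mul0r.
  by rewrite addr0.
rewrite /reg; congr sup; apply/seteqP; split => y [x Xx <-]; exists x => //;
by rewrite E.
Qed.

Definition bad B (h : history R m) : Prop :=
  exists k, (k <= size h)%N /\ B < reg (take k h).

Definition stopA B (A : adversary R m) : adversary R m :=
  fun h => if pselect (bad B h) then 0 else A h.

End Aux.

Theorem proposition3p1 (R : realType) (d : measure_display)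
  (Omega : measurableType d) (P : probability Omega R)
  (m : nat) (X : set 'rV[R]_m) (U : set 'rV[R]_m)
  (L : learner R m Omega) (T : nat) (B delta : R) :
  compact X -> X !=set0 -> convexS X ->
  bounded_set U -> U 0 ->
  (forall w h, X (L w h)) ->
  (forall (A : adversary R m) t, (forall h, U (A h)) ->
     measurable [set w | regret X L A w t <= B]) ->
  (forall A : adversary R m, (forall h, U (A h)) ->
     ((1 - delta)%:E <= P [set w | (regret X L A w T <= B)%R])%E) ->
  forall A : adversary R m, (forall h, U (A h)) ->
    ((1 - delta)%:E <=
       P [set w | forall t, (t <= T)%N -> (regret X L A w t <= B)%R])%E.
Proof.
move=> _ _ _ _ U0 _ Hmeas Hprob A UA.
set A' := @stopA R m X B A.
have UA' : forall h, U (A' h).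
  move=> h; rewrite /A' /stopA; destruct pselect; [exact: U0|exact: UA].
apply: le_trans (Hprob A' UA') _.
have mT : forall n, measurable [set w | forall t, (t <= n)%N -> regret X L A w t <= B].
  elim=> [|n IH].
    have -> : [set w | forall t, (t <= 0)%N -> regret X L A w t <= B] =
              [set w | regret X L A w 0 <= B].
      apply/seteqP; split => w /=; first by apply.
      by move=> H t; rewrite leqn0 => /eqP ->.
    exact: Hmeas.
  have -> : [set w | forall t, (t <= n.+1)%N -> regret X L A w t <= B] =
     [set w | forall t, (t <= n)%N -> regret X L A w t <= B] `&`
     [set w | regret X L A w n.+1 <= B].
    apply/seteqP; split => w /=.
      by move=> H; split; [move=> t tn; apply: H; exact: leqW|apply: H].
    move=> [H1 H2] t; rewrite leq_eqVlt => /orP [/eqP ->|] //.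
    by rewrite ltnS; apply: H1.
  by apply: measurableI; [exact: IH|exact: Hmeas].
apply: le_measure; rewrite ?inE; [exact: Hmeas|exact: mT|].
move=> w /= HT t tT; rewrite leNgt; apply/negP => Ht.
have exP : exists n, B < regret X L A w n by exists t.
case: (ex_minnP exP) => t0 Ht0 Hmin.
have t0t : (t0 <= t)%N by apply: Hmin.
have C1 : forall s, (s <= t0)%N -> play L A' w s = play L A w s.
  elim=> [//|s IH] ss /=.
  rewrite IH ?(ltnW ss) //; congr rcons; congr pair.
  rewrite /A' /stopA; destruct pselect as [[k [ks Hk]]|] => //.
  exfalso; move: ks; rewrite size_play => ks.
  rewrite take_play // in Hk.
  have := Hmin k Hk; move=> t0k.
  by move: (leq_ltn_trans t0k (leq_ltn_trans ks ss)); rewrite ltnn.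
have C2 : forall s, (t0 <= s)%N -> @reg R m X (play L A' w s) = regret X L A w t0.
  elim=> [|s IH].
    by rewrite leqn0 => /eqP H0; rewrite -H0 C1 // H0.
  rewrite leq_eqVlt => /orP [/eqP <-|]; first by rewrite C1.
  rewrite ltnS => t0s /=.
  have -> : A' (play L A' w s) = 0.
    rewrite /A' /stopA; destruct pselect as [|[]] => //.
    exists t0; rewrite size_play; split => //.
    by rewrite take_play // C1.
  by rewrite reg_rcons0 IH.
have := C2 T (leq_trans t0t tT).
rewrite /regret in HT *; rewrite /reg => E.
by move: HT; rewrite E leNgt Ht0.
Qed.
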